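(* Let $d,h$ be positive integers, $W_{\mathrm{in}} \in \mathbb{R}^{h\times d}$, $b_{\mathrm{in}}\in\mathbb{R}^h$, $W_{\mathrm{out}}\in\mathbb{R}^{d\times h}$, $b_{\mathrm{out}}\in\mathbb{R}^d$, and consider the residual block $f(x) = x + r(x)$ with $r(x) = W_{\mathrm{out}}\,\mathrm{ReLU}(W_{\mathrm{in}}x + b_{\mathrm{in}}) + b_{\mathrm{out}}$, $x\in\mathbb{R}^d$. Let $x$ be a random vector in $\mathbb{R}^d$ drawn from a data distribution, and define the ReLU gating matrix $D(x) = \mathrm{diag}\big(\mathbf{1}[W_{\mathrm{in}}x + b_{\mathrm{in}} > 0]\big)\in\{0,1\}^{h\times h}$ (indicator taken entrywise), together with the Jacobians $J_r(x) = W_{\mathrm{out}}D(x)W_{\mathrm{in}}$ and $J_f(x) = I_d + J_r(x)$. Suppose that (i) the block satisfies dynamic isometry in expectation, $\mathbb{E}_x[J_f(x)^\top J_f(x)] = I_d$; (ii) the residual is non-trivial, i.e. $J_r(x)\neq 0$ (so that $\mathbb{E}_x[\|J_r(x)\|_F^2]>0$); and (iii) each ReLU unit is active with probability $\tfrac12$, i.e. $\mathbb{E}_x[D(x)] = \tfrac12 I_h$. Then $\mathrm{tr}(W_{\mathrm{out}}W_{\mathrm{in}}) < 0$.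
   Context: $\mathrm{ReLU}$ is applied entrywise, $\mathrm{ReLU}(t)=\max(t,0)$. $\|\cdot\|_F$ denotes the Frobenius norm and $\mathrm{tr}$ the trace. Expectations $\mathbb{E}_x$ are over the data distribution of $x$ (assumed such that the expectations exist). *)

(* Defs.v *)
From HB Require Import structures.
From mathcomp Require Import all_boot all_order all_algebra.
From mathcomp Require Import all_classical all_reals all_analysis.
Set Implicit Arguments. Unset Strict Implicit. Unset Printing Implicit Defensive.
Import Order.TTheory GRing.Theory Num.Theory.
Local Open Scope ring_scope.

Definition relu {R : realType} (t : R) : R := Num.max t 0.
Definition relu_vec {R : realType} {h : nat} (v : 'cV[R]_h) : 'cV[R]_h :=
  map_mx relu v.

Definition resid {R : realType} {d h : nat} (Win : 'M[R]_(h, d)) (bin : 'cV[R]_h)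
  (Wout : 'M[R]_(d, h)) (bout : 'cV[R]_d) (x : 'cV[R]_d) : 'cV[R]_d :=
  Wout *m relu_vec (Win *m x + bin) + bout.
Definition block {R : realType} {d h : nat} (Win : 'M[R]_(h, d)) (bin : 'cV[R]_h)
  (Wout : 'M[R]_(d, h)) (bout : 'cV[R]_d) (x : 'cV[R]_d) : 'cV[R]_d :=
  x + resid Win bin Wout bout x.

Definition gate {R : realType} {d h : nat} (Win : 'M[R]_(h, d)) (bin : 'cV[R]_h)
  (x : 'cV[R]_d) : 'M[R]_h :=
  diag_mx (\row_(i < h) (if 0 < (Win *m x + bin) i 0 then 1 else 0)).

Definition Jr {R : realType} {d h : nat} (Win : 'M[R]_(h, d)) (bin : 'cV[R]_h)
  (Wout : 'M[R]_(d, h)) (x : 'cV[R]_d) : 'M[R]_d :=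
  Wout *m gate Win bin x *m Win.
Definition Jf {R : realType} {d h : nat} (Win : 'M[R]_(h, d)) (bin : 'cV[R]_h)
  (Wout : 'M[R]_(d, h)) (x : 'cV[R]_d) : 'M[R]_d :=
  1%:M + Jr Win bin Wout x.

Definition frob2 {R : realType} {m n : nat} (A : 'M[R]_(m, n)) : R :=
  \sum_(i < m) \sum_(j < n) A i j ^+ 2.

Definition Emx {dT} {T : measurableType dT} {R : realType} (P : probability T R)
  {m n : nat} (M : T -> 'M[R]_(m, n)) : 'M[R]_(m, n) :=
  \matrix_(i, j) fine ('E_P[fun t => M t i j])%E.

(* Main.v *)
Require Import Defs.
From HB Require Import structures.
From mathcomp Require Import all_boot all_order all_algebra.
From mathcomp Require Import all_classical all_reals all_analysis.
From mathcomp Require Import ring lra.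
Import Order.TTheory GRing.Theory Num.Theory.
Local Open Scope classical_set_scope.
Local Open Scope ring_scope.
Section S.
Context (R : realType) (dT : measure_display) (T : measurableType dT)
  (P : probability T R) (h : nat).

Lemma E_fin (F : {ffun 'I_h -> bool} -> R) (G : T -> {ffun 'I_h -> bool})
  (mG : forall s, measurable (G @^-1` [set s])) :
  ('E_P[fun t => F (G t)] = (\sum_s F s * fine (P (G @^-1` [set s])))%:E)%E.
Proof.
rewrite unlock.
have pw : forall t, ((F (G t))%:E = \sum_s ((F s)%:E * (\1_(G @^-1` [set s]) t)%:E))%E.
  move=> t; rewrite (bigD1 (G t)) //= big1 ?adde0.
    by rewrite indicE mem_set //= mule1.
  move=> s /negbTE hs; rewrite indicE memNset ?mule0 //=.
  by move=> hG; rewrite hG eqxx in hs.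
under eq_integral do rewrite pw.
rewrite integral_sum //; last first.
  by move=> s; apply: integrableZl => //; apply: integrable_indic.
rewrite -sumEFin; apply: eq_bigr => s _.
rewrite integralZl //; last by apply: integrable_indic.
rewrite integral_indic // setIT EFinM fineK //; exact: fin_num_measure.
Qed.
End S.
Section S2.
Context (R : realType) (dT : measure_display) (T : measurableType dT) (d h : nat)
  (Win : 'M[R]_(h, d)) (bin : 'cV[R]_h) (X : T -> 'cV[R]_d)
  (X_meas : forall i : 'I_d, measurable_fun setT (fun t => X t i 0)).

Definition Gv (t : T) : {ffun 'I_h -> bool} :=
  [ffun k => 0 < (Win *m X t + bin) k 0].

Lemma mpre (k : 'I_h) : measurable_fun setT (fun t => (Win *m X t + bin) k 0).
Proof.
under eq_fun do rewrite !mxE.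
apply: measurable_realfun.measurable_funD; last exact: measurable_cst.
under eq_fun do rewrite -big_enum.
apply: measurable_sum => j; apply: measurable_realfun.measurable_funM => //; exact: measurable_cst.
Qed.

Lemma mbool (c : bool) : measurable_fun [set: bool] (fun x : bool => x == c).
Proof. by []. Qed.

Lemma mG s : measurable (Gv @^-1` [set s]).
Proof.
have -> : Gv @^-1` [set s] = setT `&` (fun t => \big[andb/true]_(k < h) ((Gv t k) == s k)) @^-1` [set true].
  apply/seteqP; split => t /=.
    by move=> ->; rewrite big1 // => k _; rewrite eqxx.
  move=> [_ H]; apply/ffunP => k; apply/eqP.
  have H' : \big[andb/true]_(k0 < h) (Gv t k0 == s k0) by rewrite H.
  by move: H'; rewrite (bigD1 k) //= => /andP[].
have mk : forall k : 'I_h, measurable_fun setT (fun t => Gv t k == s k).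
  move=> k; under eq_fun do rewrite ffunE.
  apply: (measurableT_comp (mbool (s k))).
  apply: measurable_realfun.measurable_fun_ltr; [exact: measurable_cst | exact: mpre].
have gen : forall r : seq 'I_h,
    measurable_fun setT (fun t => \big[andb/true]_(k <- r) (Gv t k == s k)).
  elim => [|k r IH].
    under eq_fun do rewrite big_nil; exact: measurable_cst.
  under eq_fun do rewrite big_cons; exact: measurable_and.
exact: (gen (index_enum _)).
Qed.
End S2.
Section Alg.
Context (R : realType) (d h : nat) (Win : 'M[R]_(h, d)) (Wout : 'M[R]_(d, h)).

Definition gateS (s : {ffun 'I_h -> bool}) : 'M[R]_h := diag_mx (\row_i (s i)%:R).
Definition JrS s := Wout *m gateS s *m Win.
Definition JfS s : 'M[R]_d := 1%:M + JrS s.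

Lemma tr_frob (A : 'M[R]_d) : \tr (A^T *m A) = frob2 A.
Proof.
rewrite /mxtrace /frob2 exchange_big /=; apply: eq_bigr => i _.
by rewrite mxE; apply: eq_bigr => l _; rewrite mxE expr2.
Qed.

Lemma tr_JfS s : \tr ((JfS s)^T *m JfS s) = d%:R + 2 * \tr (JrS s) + frob2 (JrS s).
Proof.
rewrite /JfS mulmxDr mulmx1 mxtraceD (mxtrace_tr (1%:M + JrS s)).
rewrite [(1%:M + _)^T]raddfD /= trmx1.
rewrite mulmxDl mul1mx !mxtraceD mxtrace1 tr_frob.
ring.
Qed.

Lemma tr_JrS s : \tr (JrS s) = \sum_k (s k)%:R * (Win *m Wout) k k.
Proof.
rewrite /JrS mxtrace_mulC mulmxA mul_mx_diag /mxtrace; apply: eq_bigr => k _.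
by rewrite !mxE mulrC.
Qed.

Lemma alg (mu : {ffun 'I_h -> bool} -> R)
  (H1 : \sum_s mu s = 1)
  (Hh : forall k, \sum_s gateS s k k * mu s = 1 / 2)
  (Hiso : forall i, \sum_s ((JfS s)^T *m JfS s) i i * mu s = 1)
  (Hpos : 0 < \sum_s frob2 (JrS s) * mu s) :
  \tr (Wout *m Win) < 0.
Proof.
have E1 : \sum_s \tr ((JfS s)^T *m JfS s) * mu s = d%:R.
  rewrite /mxtrace; under eq_bigr do rewrite mulr_suml.
  rewrite exchange_big /=.
  under eq_bigr do rewrite Hiso.
  by rewrite sumr_const card_ord.
have E2 : \sum_s \tr (JrS s) * mu s = \tr (Win *m Wout) / 2.
  under eq_bigr do rewrite tr_JrS mulr_suml.
  rewrite exchange_big /= /mxtrace mulr_suml; apply: eq_bigr => k _.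
  have -> : (Win *m Wout) k k / 2 = (Win *m Wout) k k * (1/2) by rewrite mul1r.
  rewrite -(Hh k) mulr_sumr; apply: eq_bigr => s _.
  rewrite /gateS mxE !mxE eqxx mulr1n; ring.
move: E1; under eq_bigr do rewrite tr_JfS !mulrDl.
rewrite !big_split /= -mulr_sumr H1 mulr1.
under eq_bigr do rewrite -mulrA.
rewrite -mulr_sumr E2 mxtrace_mulC => E.
lra.
Qed.
End Alg.
Arguments gateS {R h}. Arguments JrS {R d h}. Arguments JfS {R d h}.

Theorem proposition1 (R : realType) (dT : measure_display) (T : measurableType dT)
  (P : probability T R) (d h : nat) (hd : (0 < d)%N) (hh : (0 < h)%N)
  (Win : 'M[R]_(h, d)) (bin : 'cV[R]_h) (Wout : 'M[R]_(d, h)) (bout : 'cV[R]_d)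
  (X : T -> 'cV[R]_d)
  (X_meas : forall i : 'I_d, measurable_fun setT (fun t => X t i 0))
  (iso : Emx P (fun t => (Jf Win bin Wout (X t))^T *m Jf Win bin Wout (X t)) = 1%:M)
  (nontriv : (0 < 'E_P[fun t => frob2 (Jr Win bin Wout (X t))])%E)
  (half : Emx P (fun t => gate Win bin (X t)) = (1 / 2 : R)%:M) :
  \tr (Wout *m Win) < 0.
Proof.
pose G := @Gv R dT T d h Win bin X.
pose mu := fun s => fine (P (G @^-1` [set s])).
have mGs : forall s, measurable (G @^-1` [set s]) := @mG R dT T d h Win bin X X_meas.
have gateE : forall t, gate Win bin (X t) = gateS (G t).
  move=> t; rewrite /gate /gateS; congr diag_mx; apply/rowP => i.
  rewrite [LHS]mxE [RHS]mxE /G /Gv ffunE; by case: ifP.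
have JrE : forall t, Jr Win bin Wout (X t) = JrS Win Wout (G t).
  by move=> t; rewrite /Jr gateE.
have JfE : forall t, Jf Win bin Wout (X t) = JfS Win Wout (G t).
  by move=> t; rewrite /Jf JrE.
have Efin : forall F : {ffun 'I_h -> bool} -> R,
    ('E_P[fun t => F (G t)] = (\sum_s F s * mu s)%:E)%E.
  by move=> F; apply: E_fin.
have EmxE : forall m n (M : T -> 'M[R]_(m, n)) (F : {ffun 'I_h -> bool} -> 'M[R]_(m, n)),
    (forall t, M t = F (G t)) -> forall i j, Emx P M i j = \sum_s F s i j * mu s.
  move=> m n M F hM i j; rewrite mxE.
  have -> : (fun t => M t i j) = (fun t => F (G t) i j).
    by apply: funext => t; rewrite hM.
  by rewrite (Efin (fun s => F s i j)).
apply: (@alg R d h Win Wout mu).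
- have H := Efin (fun _ => 1); rewrite expectation_cst in H; move: H => [H]; rewrite [RHS]H.
  by under eq_bigr do rewrite mul1r.
- move=> k; have := congr1 (fun M : 'M[R]_h => M k k) half => /=.
  rewrite (EmxE _ _ _ (fun s => gateS s) gateE) mxE eqxx mulr1n => ->.
  by [].
- move=> i; have := congr1 (fun M : 'M[R]_d => M i i) iso => /=.
  rewrite (EmxE _ _ _ (fun s => (JfS Win Wout s)^T *m JfS Win Wout s)); last first.
    by move=> t; rewrite JfE.
  by rewrite mxE eqxx mulr1n.
- move: nontriv.
  have -> : (fun t => frob2 (Jr Win bin Wout (X t))) = (fun t => frob2 (JrS Win Wout (G t))).
    by apply: funext => t; rewrite JrE.
  by rewrite (Efin (fun s => frob2 (JrS Win Wout s))) lte_fin.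
Qed.
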